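(* Let $\lambda_\pm : \mathbb{R} \to \mathbb{R}_\pm$ be defined by $\lambda_\pm(x) = x \pm \sqrt{1+x^2}$ (these are increasing bijections onto the positive and negative reals respectively), and let \[ p_\gamma' := \frac{p}{\sqrt{p^2 + |q|^2\cosh^{-2}(2\gamma)}} \in (-1,1). \] Define subsets $\sigma_\pm(U) \subset \mathbb{R}_\pm$ by \[ \sigma_\pm(U) = \begin{cases} \{\lambda_\pm(+p\sinh(2\gamma))\}, & a_m < \pm p_\gamma' < a_p, \\ \{\lambda_\pm(-p\sinh(2\gamma))\}, & a_p < \pm p_\gamma' < a_m, \\ \emptyset, & \text{otherwise}. \end{cases} \] Then the set of eigenvalues of $U$ satisfies $\sigma_{\mathrm{p}}(U) = \sigma_-(U) \cup \sigma_+(U)$.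
   Context: Let $L$ be the bilateral left shift on $\ell^2(\mathbb{Z}) = \ell^2(\mathbb{Z};\mathbb{C})$, $(L\Psi)(x) = \Psi(x+1)$; bounded sequences are identified with the corresponding multiplication operators. Fix $\gamma \in \mathbb{R}$, $p \in (-1,1)$, $q \in \mathbb{C}$ with $p^2+|q|^2 = 1$, and $a_p, a_m \in (-1,1)$, $b_p, b_m \in \mathbb{C}$ with $a_p^2 + |b_p|^2 = a_m^2 + |b_m|^2 = 1$. Let $a(x) = a_p$, $b(x) = b_p$ for $x \ge 0$ and $a(x) = a_m$, $b(x) = b_m$ for $x < 0$. On $\mathcal{H} = \ell^2(\mathbb{Z};\mathbb{C}^2) \cong \ell^2(\mathbb{Z}) \oplus \ell^2(\mathbb{Z})$ define the (generally non-unitary) two-phase split-step quantum walk $U = SC$, where \[ S = \begin{pmatrix} p & qL \\ \overline{q}L^* & -p \end{pmatrix},\qquad C = \begin{pmatrix} e^{-2\gamma} a & \overline{b} \\ b & -e^{2\gamma} a \end{pmatrix}. \] $\sigma_{\mathrm{p}}(U)$ denotes the set of $\lambda \in \mathbb{C}$ with $\ker(U - \lambda) \neq \{0\}$ in $\mathcal{H}$. $\mathbb{R}_+$ and $\mathbb{R}_-$ denote the sets of positive and negative real numbers. *)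

(* Defs.v *)
From Stdlib Require Import Reals ZArith.
From Coquelicot Require Import Coquelicot.

Open Scope R_scope.

Definition two_phase {T : Type} (vp vm : T) (x : Z) : T :=
  if (0 <=? x)%Z then vp else vm.

Definition sqnorm2 (v : C * C) : R := (Cmod (fst v))^2 + (Cmod (snd v))^2.

Definition is_l2 (Psi : Z -> C * C) : Prop :=
  ex_series (fun n : nat => sqnorm2 (Psi (Z.of_nat n))) /\
  ex_series (fun n : nat => sqnorm2 (Psi (- Z.of_nat n - 1)%Z)).

(* coin operator C = [[e^{-2g} a, conj b],[b, -e^{2g} a]] acting pointwise *)
Definition coin_op (gamma : R) (a : Z -> R) (b : Z -> C)
  (Psi : Z -> C * C) (x : Z) : C * C :=
  ((RtoC (exp (-2 * gamma) * a x) * fst (Psi x) + Cconj (b x) * snd (Psi x))%C,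
   (b x * fst (Psi x) - RtoC (exp (2 * gamma) * a x) * snd (Psi x))%C).

(* shift operator S = [[p, q L],[conj q L^*, -p]], (L Psi)(x) = Psi(x+1),
   (L^* Psi)(x) = Psi(x-1) *)
Definition shift_op (p : R) (q : C) (Phi : Z -> C * C) (x : Z) : C * C :=
  ((RtoC p * fst (Phi x) + q * snd (Phi (x + 1)%Z))%C,
   (Cconj q * fst (Phi (x - 1)%Z) - RtoC p * snd (Phi x))%C).

Definition U_op (gamma p : R) (q : C) (ap am : R) (bp bm : C)
  (Psi : Z -> C * C) : Z -> C * C :=
  shift_op p q (coin_op gamma (two_phase ap am) (two_phase bp bm) Psi).

Definition in_point_spectrum (gamma p : R) (q : C) (ap am : R) (bp bm : C)
  (lam : C) : Prop :=
  exists Psi : Z -> C * C,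
    is_l2 Psi /\ (exists x, Psi x <> (RtoC 0, RtoC 0)) /\
    forall x, U_op gamma p q ap am bp bm Psi x =
              ((lam * fst (Psi x))%C, (lam * snd (Psi x))%C).

Definition lambda_plus (x : R) : R := x + sqrt (1 + x ^ 2).
Definition lambda_minus (x : R) : R := x - sqrt (1 + x ^ 2).

Definition p_gamma' (gamma p : R) (q : C) : R :=
  p / sqrt (p ^ 2 + (Cmod q) ^ 2 / (cosh (2 * gamma)) ^ 2).

Definition in_sigma_plus (gamma p : R) (q : C) (ap am : R) (lam : C) : Prop :=
  (am < p_gamma' gamma p q < ap /\ lam = RtoC (lambda_plus (p * sinh (2 * gamma)))) \/
  (ap < p_gamma' gamma p q < am /\ lam = RtoC (lambda_plus (- (p * sinh (2 * gamma))))).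

Definition in_sigma_minus (gamma p : R) (q : C) (ap am : R) (lam : C) : Prop :=
  (am < - p_gamma' gamma p q < ap /\ lam = RtoC (lambda_minus (p * sinh (2 * gamma)))) \/
  (ap < - p_gamma' gamma p q < am /\ lam = RtoC (lambda_minus (- (p * sinh (2 * gamma))))).

(* Main.v *)
Require Import Defs.
From Stdlib Require Import Reals ZArith Lia Lra Psatz Nsatz.
From Coquelicot Require Import Coquelicot.
Open Scope R_scope.

Lemma Csth : Setoid_Theory C (@eq C).
Proof. constructor;red;intros;subst;trivial. Qed.
#[global] Instance Cops: (@Ring_ops C (RtoC 0) (RtoC 1) Cplus Cmult Cminus Copp (@eq C)).
Defined.
#[global] Instance Cri : (@Ncring.Ring _ _ _ _ _ _ _ _ Cops).
Proof.
constructor.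
all: try apply Csth.
all: try (intros ? ? H1 ? ? H2; cbv in H1, H2; subst; reflexivity).
all: try (intros ? ? H1; cbv in H1; subst; reflexivity).
all: intros; cbv [eq_notation equality add_notation mul_notation sub_notation opp_notation zero_notation one_notation Cops zero one addition multiplication subtraction opposite]; first [ring | (apply injective_projections; destruct x; try destruct y; try destruct z; simpl; ring)].
Defined.
#[global] Instance Ccri: (Cring (Rr:=Cri)).
Proof. red. intros; cbv [eq_notation equality mul_notation Cops multiplication]; ring. Defined.
Lemma Cmult_integral : forall x y : C, (x * y = 0 -> x = 0 \/ y = 0)%C.
Proof.
  intros x y H. destruct (Ceq_dec x 0) as [Hx|Hx]; [now left|right].
  apply (f_equal (fun z => / x * z)%C) in H. rewrite Cmult_assoc, Cinv_l in H by auto.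
  rewrite Cmult_1_l, Cmult_0_r in H. exact H.
Qed.
#[global] Instance Cdi : (Integral_domain (Rcr:=Ccri)).
Proof. constructor. exact Cmult_integral. exact C1_nz. Defined.

Open Scope C_scope.

Lemma conj_mul (z : C) : Cconj z * z = RtoC (Cmod z ^ 2)%R.
Proof.
  destruct z as [x y]. unfold Cmod; cbn [fst snd].
  rewrite pow2_sqrt by nra.
  apply injective_projections; simpl; ring.
Qed.

Lemma mul_conj (z : C) : z * Cconj z = RtoC (Cmod z ^ 2)%R.
Proof. rewrite Cmult_comm. apply conj_mul. Qed.

Lemma RtoC_mulE (x y : R) : RtoC (x * y) = RtoC x * RtoC y.
Proof. apply injective_projections; simpl; ring. Qed.

Lemma RtoC_addE (x y : R) : RtoC (x + y) = RtoC x + RtoC y.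
Proof. apply injective_projections; simpl; ring. Qed.
Lemma RtoC_subE (x y : R) : RtoC (x - y) = RtoC x - RtoC y.
Proof. apply injective_projections; simpl; ring. Qed.

Lemma RtoC_neq (x : R) : x <> 0%R -> RtoC x <> 0.
Proof. intros H E. apply H. injection E; auto. Qed.

Lemma Cmod_neq0 (z : C) : (0 < Cmod z)%R -> z <> 0.
Proof. intros H E. subst. rewrite Cmod_0 in H. lra. Qed.

Section CE.
Variables (gamma p : R) (q : C) (a : Z -> R) (b : Z -> C).

Definition CE1 (lam : C) (Psi : Z -> C * C) (x : Z) : Prop :=
  RtoC (exp (-2 * gamma) * a x) * fst (Psi x) + Cconj (b x) * snd (Psi x) =
  lam * (RtoC p * fst (Psi x) + q * snd (Psi (x + 1)%Z)).
Definition CE2 (lam : C) (Psi : Z -> C * C) (x : Z) : Prop :=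
  b x * fst (Psi x) - RtoC (exp (2 * gamma) * a x) * snd (Psi x) =
  lam * (Cconj q * fst (Psi (x - 1)%Z) - RtoC p * snd (Psi x)).

Hypothesis Hpq : (p ^ 2 + Cmod q ^ 2 = 1)%R.

Lemma pq_C : RtoC p * RtoC p + q * Cconj q = 1.
Proof. rewrite mul_conj, <- RtoC_mulE, <- RtoC_addE. f_equal. lra. Qed.

Lemma ce_of_eig (lam : C) (Psi : Z -> C * C) :
  (forall x, shift_op p q (coin_op gamma a b Psi) x = (lam * fst (Psi x), lam * snd (Psi x))) ->
  forall x, CE1 lam Psi x /\ CE2 lam Psi x.
Proof.
  intros H x. pose proof pq_C as Hq. clear Hpq.
  set (Phi := coin_op gamma a b Psi) in *.
  unfold CE1, CE2.
  change (RtoC (exp (-2 * gamma) * a x) * fst (Psi x) + Cconj (b x) * snd (Psi x)) with (fst (Phi x)).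
  change (b x * fst (Psi x) - RtoC (exp (2 * gamma) * a x) * snd (Psi x)) with (snd (Phi x)).
  clearbody Phi.
  assert (E1a := f_equal fst (H x)). assert (E2b := f_equal snd (H (x + 1)%Z)).
  assert (E3a := f_equal fst (H (x - 1)%Z)). assert (E1b := f_equal snd (H x)).
  unfold shift_op in E1a, E2b, E3a, E1b. cbn [fst snd] in E1a, E2b, E3a, E1b.
  replace (x + 1 - 1)%Z with x in E2b by lia.
  replace (x - 1 + 1)%Z with x in E3a by lia.
  clear H.
  split; nsatz.
Qed.

Lemma eig_of_ce (lam : C) (Psi : Z -> C * C) :
  (forall x, CE1 lam Psi x /\ CE2 lam Psi x) ->
  forall x, shift_op p q (coin_op gamma a b Psi) x = (lam * fst (Psi x), lam * snd (Psi x)).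
Proof.
  intros H x. pose proof pq_C as Hq. clear Hpq.
  destruct (H x) as [A1 A2]. destruct (H (x+1)%Z) as [B1 B2]. destruct (H (x-1)%Z) as [C1 C2].
  unfold CE1, CE2 in *.
  replace (x + 1 - 1)%Z with x in B2 by lia.
  replace (x - 1 + 1)%Z with x in C1 by lia.
  unfold shift_op, coin_op; simpl.
  apply injective_projections; simpl; nsatz.
Qed.
End CE.

Lemma lim_le0 (c K : R) (s : nat -> R) :
  (forall n, c <= K * s n)%R -> is_lim_seq s 0%R -> (c <= 0)%R.
Proof.
  intros H Hs.
  pose proof (is_lim_seq_le (fun _ => c) (fun n => K * s n)%R c (Rbar_mult K 0%R) H
    (is_lim_seq_const c) (is_lim_seq_scal_l s K 0%R Hs)) as L.
  simpl in L. rewrite Rmult_0_r in L. exact L.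
Qed.

Lemma csqrt (z : C) : exists w, w * w = z.
Proof.
  destruct z as [x y].
  set (r := sqrt (x * x + y * y)).
  assert (Hr0 : (0 <= r)%R) by apply sqrt_pos.
  assert (Hr2 : (r * r = x * x + y * y)%R) by (apply sqrt_sqrt; nra).
  assert (Hrx : (Rabs x <= r)%R).
  { assert (Ha : (Rabs x * Rabs x = x * x)%R) by (rewrite <- Rabs_mult; apply Rabs_pos_eq; nra).
    pose proof (Rabs_pos x). destruct (Rle_dec (Rabs x) r); nra. }
  assert (H1 : (0 <= (r + x) / 2)%R) by (apply Rabs_le_between in Hrx; lra).
  assert (H2 : (0 <= (r - x) / 2)%R) by (apply Rabs_le_between in Hrx; lra).
  set (u := sqrt ((r + x) / 2)). set (v := sqrt ((r - x) / 2)).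
  assert (Hu : (u * u = (r + x) / 2)%R) by (apply sqrt_sqrt; lra).
  assert (Hv : (v * v = (r - x) / 2)%R) by (apply sqrt_sqrt; lra).
  assert (Huv : (u * v = Rabs y / 2)%R).
  { unfold u, v. rewrite <- sqrt_mult_alt by lra.
    replace ((r + x) / 2 * ((r - x) / 2))%R with ((Rabs y / 2) * (Rabs y / 2))%R.
    - apply sqrt_square. pose proof (Rabs_pos y); lra.
    - replace ((r + x) / 2 * ((r - x) / 2))%R with ((r * r - x * x) / 4)%R by field.
      rewrite Hr2. assert (Hy2: (Rabs y * Rabs y = y*y)%R) by (rewrite <- Rabs_mult; apply Rabs_pos_eq; nra). nra. }
  destruct (Rle_dec 0 y) as [Hy|Hy].
  - exists (u, v). apply injective_projections; simpl.
    + lra.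
    + rewrite Rabs_pos_eq in Huv by lra. lra.
  - exists (u, (- v)%R). apply injective_projections; simpl.
    + lra.
    + rewrite Rabs_left in Huv by lra. lra.
Qed.

Lemma two_neq0 : RtoC 2 <> 0.
Proof. apply RtoC_neq. lra. Qed.

Lemma quad_roots (a b c : C) : a <> 0 ->
  exists n1 n2, n1 * n2 * a = c /\ (forall x, a * x * x + b * x + c = a * (x - n1) * (x - n2)).
Proof.
  intros Ha. destruct (csqrt (b * b - RtoC 4 * a * c)) as [d Hd].
  pose proof two_neq0 as H2.
  assert (H4 : RtoC 4 = RtoC 2 * RtoC 2) by (rewrite <- RtoC_mulE; f_equal; lra).
  exists ((- b + d) / (RtoC 2 * a)), ((- b - d) / (RtoC 2 * a)). split.
  - transitivity ((b * b - d * d) / (RtoC 4 * a)).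
    + rewrite H4. field. auto.
    + rewrite Hd. rewrite H4. field. auto.
  - intros x. transitivity (a * x * x + b * x + (b * b - d * d) / (RtoC 4 * a)).
    + rewrite Hd. rewrite H4. field. auto.
    + rewrite H4. field. auto.
Qed.

Lemma Cmult_eq_reg_l (c x y : C) : c <> 0 -> c * x = c * y -> x = y.
Proof.
  intros Hc H. apply (f_equal (fun z => / c * z)) in H.
  rewrite !Cmult_assoc, Cinv_l, !Cmult_1_l in H by auto. exact H.
Qed.

Lemma null_left (M11 M12 M21 M22 : C) : M11 * M22 - M12 * M21 = 0 ->
  exists l1 l2 : C, (l1 <> 0 \/ l2 <> 0) /\ l1 * M11 + l2 * M21 = 0 /\ l1 * M12 + l2 * M22 = 0.
Proof.
  intros Hd.
  destruct (Ceq_dec M21 0) as [E21|E21]; destruct (Ceq_dec M11 0) as [E11|E11].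
  2,3,4: exists M21, (- M11); split; [ | split; nsatz].
  2: right; intro E; apply E11; replace M11 with (- - M11) by ring; rewrite E; ring.
  2,3: left; auto.
  subst.
  destruct (Ceq_dec M22 0) as [E22|E22]; destruct (Ceq_dec M12 0) as [E12|E12].
  2,3,4: exists M22, (- M12); split; [ | split; nsatz].
  2: right; intro E; apply E12; replace M12 with (- - M12) by ring; rewrite E; ring.
  2,3: left; auto.
  subst. exists 1, 0. split; [left; apply C1_nz | split; ring].
Qed.

Lemma inv_A (A11 A12 A21 A22 x y : C) : A11 * A22 - A12 * A21 <> 0 ->
  A11 * x + A12 * y = 0 -> A21 * x + A22 * y = 0 -> x = 0 /\ y = 0.
Proof.
  intros Hd H1 H2.
  assert (Ex : (A11 * A22 - A12 * A21) * x = 0) by nsatz.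
  assert (Ey : (A11 * A22 - A12 * A21) * y = 0) by nsatz.
  destruct (Cmult_integral _ _ Ex); [contradiction|].
  destruct (Cmult_integral _ _ Ey); [contradiction|]. auto.
Qed.

Lemma inv_lA (A11 A12 A21 A22 x y : C) : A11 * A22 - A12 * A21 <> 0 ->
  x * A11 + y * A21 = 0 -> x * A12 + y * A22 = 0 -> x = 0 /\ y = 0.
Proof.
  intros Hd H1 H2.
  assert (Ex : (A11 * A22 - A12 * A21) * x = 0) by nsatz.
  assert (Ey : (A11 * A22 - A12 * A21) * y = 0) by nsatz.
  destruct (Cmult_integral _ _ Ex); [contradiction|].
  destruct (Cmult_integral _ _ Ey); [contradiction|]. auto.
Qed.

Lemma Cmod_sq_bound (f1 f2 x y : C) :
  (Cmod (f1 * x + f2 * y) ^ 2 <= (2 * (Cmod f1 ^ 2 + Cmod f2 ^ 2)) * (Cmod x ^ 2 + Cmod y ^ 2))%R.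
Proof.
  pose proof (Cmod_triangle (f1 * x) (f2 * y)) as T.
  rewrite !Cmod_mult in T.
  pose proof (Cmod_ge_0 (f1 * x + f2 * y)).
  pose proof (Cmod_ge_0 f1). pose proof (Cmod_ge_0 f2). pose proof (Cmod_ge_0 x). pose proof (Cmod_ge_0 y).
  assert (Cmod (f1 * x + f2 * y) ^ 2 <= (Cmod f1 * Cmod x + Cmod f2 * Cmod y) ^ 2)%R.
  { apply pow_incr. lra. }
  nra.
Qed.

Lemma half_line (A11 A12 A21 A22 B11 B12 B21 B22 : C) (v1 v2 : nat -> C) :
  A11 * A22 - A12 * A21 <> 0 ->
  Cmod (B11 * B22 - B12 * B21) = Cmod (A11 * A22 - A12 * A21) ->
  (forall n, A11 * v1 (S n) + A12 * v2 (S n) = B11 * v1 n + B12 * v2 n /\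
             A21 * v1 (S n) + A22 * v2 (S n) = B21 * v1 n + B22 * v2 n) ->
  is_lim_seq (fun n => Cmod (v1 n) ^ 2 + Cmod (v2 n) ^ 2)%R 0%R ->
  exists rho, (Cmod rho < 1)%R /\ forall n, v1 (S n) = rho * v1 n /\ v2 (S n) = rho * v2 n.
Proof.
  intros HdA HdB Hrec Hlim.
  set (dA := A11 * A22 - A12 * A21) in *.
  set (dB := B11 * B22 - B12 * B21) in *.
  assert (Hnu : exists nu, (1 <= Cmod nu)%R /\
            (B11 - nu * A11) * (B22 - nu * A22) - (B12 - nu * A12) * (B21 - nu * A21) = 0).
  { destruct (quad_roots dA (- (A11 * B22 + B11 * A22 - A12 * B21 - B12 * A21)) dB HdA)
      as [n1 [n2 [Hp Hf]]].
    assert (Hchar : forall nu, (B11 - nu * A11) * (B22 - nu * A22) - (B12 - nu * A12) * (B21 - nu * A21)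
                      = dA * (nu - n1) * (nu - n2)).
    { intros nu. rewrite <- Hf. unfold dA, dB. ring. }
    assert (Hm : (Cmod n1 * Cmod n2 = 1)%R).
    { apply (f_equal Cmod) in Hp. rewrite !Cmod_mult, HdB in Hp.
      assert (0 < Cmod dA)%R by (apply Cmod_gt_0; auto).
      apply (Rmult_eq_reg_r (Cmod dA)); lra. }
    destruct (Rle_dec 1 (Cmod n1)) as [H1|H1].
    - exists n1. split; auto. rewrite Hchar. ring.
    - exists n2. split.
      + pose proof (Cmod_ge_0 n1). pose proof (Cmod_ge_0 n2). nra.
      + rewrite Hchar. ring. }
  destruct Hnu as [nu [Hnu1 Hnu2]].
  destruct (null_left _ _ _ _ Hnu2) as [l1 [l2 [Hl0 [Hl1 Hl2]]]].
  set (f1 := l1 * A11 + l2 * A21). set (f2 := l1 * A12 + l2 * A22).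
  assert (Hf0 : f1 <> 0 \/ f2 <> 0).
  { destruct (Ceq_dec f1 0) as [E1|E1]; [|left; auto].
    destruct (Ceq_dec f2 0) as [E2|E2]; [|right; auto].
    exfalso. destruct (inv_lA A11 A12 A21 A22 l1 l2 HdA E1 E2). destruct Hl0; contradiction. }
  set (g := fun n => f1 * v1 n + f2 * v2 n).
  assert (Hg : forall n, g (S n) = nu * g n).
  { intros n. destruct (Hrec n) as [R1 R2]. unfold g, f1, f2.
    clear - R1 R2 Hl1 Hl2. nsatz. }
  assert (Hgn : forall n, g n = Cpow nu n * g 0%nat).
  { induction n as [|n IH]. - simpl. ring. - rewrite Hg, IH. simpl. ring. }
  assert (Hg0 : g 0%nat = 0).
  { apply Cmod_eq_0.
    assert (Cmod (g 0%nat) ^ 2 <= 0)%R.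
    { apply (lim_le0 _ (2 * (Cmod f1 ^ 2 + Cmod f2 ^ 2))%R (fun n => (Cmod (v1 n) ^ 2 + Cmod (v2 n) ^ 2)%R)); [|exact Hlim].
      intros n. eapply Rle_trans; [|apply Cmod_sq_bound]. fold (g n).
      rewrite (Hgn n), Cmod_mult, Cmod_pow.
      assert (1 <= Cmod nu ^ n)%R by (apply pow_R1_Rle; auto).
      pose proof (Cmod_ge_0 (g 0%nat)). 
      assert (0 <= Cmod (g 0%nat) ^ 2)%R by (apply pow_le; auto).
      replace ((Cmod nu ^ n * Cmod (g 0%nat)) ^ 2)%R with ((Cmod nu ^ n) ^ 2 * Cmod (g 0%nat) ^ 2)%R by ring.
      assert (1 <= (Cmod nu ^ n) ^ 2)%R by nra. nra. }
    pose proof (Cmod_ge_0 (g 0%nat)). nra. }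
  assert (Hgz : forall n, g n = 0). { intros n. rewrite Hgn, Hg0. ring. }
  assert (Hcase : (v1 0%nat = 0 /\ v2 0%nat = 0) \/ (v1 0%nat <> 0 \/ v2 0%nat <> 0)).
  { destruct (Ceq_dec (v1 0%nat) 0); destruct (Ceq_dec (v2 0%nat) 0); tauto. }
  destruct Hcase as [[Z1 Z2]|Hv0].
  -
    exists 0. split. { rewrite Cmod_0. lra. }
    assert (Hz : forall n, v1 n = 0 /\ v2 n = 0).
    { induction n as [|n [IH1 IH2]]; [auto|].
      destruct (Hrec n) as [R1 R2]. rewrite IH1, IH2 in R1, R2.
      apply (inv_A A11 A12 A21 A22); auto.
      - rewrite R1. ring. - rewrite R2. ring. }
    intros n. destruct (Hz (S n)) as [-> ->]. destruct (Hz n) as [-> ->]. split; ring.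
  -     assert (Hcross : v1 0%nat * v2 1%nat - v2 0%nat * v1 1%nat = 0).
    { pose proof (Hgz 0%nat) as G0. pose proof (Hgz 1%nat) as G1. unfold g in G0, G1.
      assert (E1 : f1 * (v1 0%nat * v2 1%nat - v2 0%nat * v1 1%nat) = 0) by (clear - G0 G1; nsatz).
      assert (E2 : f2 * (v1 0%nat * v2 1%nat - v2 0%nat * v1 1%nat) = 0) by (clear - G0 G1; nsatz).
      destruct Hf0 as [F|F].
      - destruct (Cmult_integral _ _ E1); [contradiction|auto].
      - destruct (Cmult_integral _ _ E2); [contradiction|auto]. }
    assert (Hrho : exists rho, v1 1%nat = rho * v1 0%nat /\ v2 1%nat = rho * v2 0%nat).
    { destruct (Ceq_dec (v1 0%nat) 0) as [Z|Z].
      - destruct Hv0 as [|Hv0]; [contradiction|].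
        exists (v2 1%nat / v2 0%nat). split.
        + rewrite Z in Hcross |- *.
          assert (E : v2 0%nat * v1 1%nat = 0).
          { transitivity (- (0 * v2 1%nat - v2 0%nat * v1 1%nat)); [ring|]. rewrite Hcross. ring. }
          destruct (Cmult_integral _ _ E); [contradiction|]. rewrite H. ring.
        + field. auto.
      - exists (v1 1%nat / v1 0%nat). split.
        + field. auto.
        + apply (Cmult_eq_reg_l (v1 0%nat)); auto.
          transitivity (v2 0%nat * v1 1%nat).
          { transitivity (v2 0%nat * v1 1%nat + (v1 0%nat * v2 1%nat - v2 0%nat * v1 1%nat)); [ring|].
            rewrite Hcross. ring. }
          field. auto. }
    destruct Hrho as [rho [Hr1 Hr2]].
    assert (Hall : forall n, v1 (S n) = rho * v1 n /\ v2 (S n) = rho * v2 n).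
    { induction n as [|n [IH1 IH2]]; [auto|].
      destruct (Hrec (S n)) as [R1 R2]. destruct (Hrec n) as [S1 S2].
      apply (inv_A A11 A12 A21 A22 (v1 (S (S n)) - rho * v1 (S n)) (v2 (S (S n)) - rho * v2 (S n))) in HdA.
      - destruct HdA as [E1 E2]. split.
        + transitivity (rho * v1 (S n) + (v1 (S (S n)) - rho * v1 (S n))); [ring|]. rewrite E1. ring.
        + transitivity (rho * v2 (S n) + (v2 (S (S n)) - rho * v2 (S n))); [ring|]. rewrite E2. ring.
      - clear - R1 S1 IH1 IH2. nsatz.
      - clear - R2 S2 IH1 IH2. nsatz. }
    exists rho. split; auto.
    destruct (Rlt_le_dec (Cmod rho) 1) as [Hlt|Hge]; auto. exfalso.
    set (s := fun n => (Cmod (v1 n) ^ 2 + Cmod (v2 n) ^ 2)%R).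
    assert (Hs : forall n, s n = ((Cmod rho ^ n) ^ 2 * s 0%nat)%R).
    { induction n as [|n IH]. - simpl. unfold s. ring.
      - unfold s in *. destruct (Hall n) as [-> ->]. rewrite !Cmod_mult. simpl pow in *. nra. }
    assert (Hs0 : (0 < s 0%nat)%R).
    { unfold s. destruct Hv0 as [N|N]; apply Cmod_gt_0 in N;
      pose proof (Cmod_ge_0 (v1 0%nat)); pose proof (Cmod_ge_0 (v2 0%nat)); nra. }
    assert (s 0%nat <= 0)%R.
    { apply (lim_le0 _ 1%R s); [|exact Hlim].
      intros n. rewrite (Hs n). assert (1 <= Cmod rho ^ n)%R by (apply pow_R1_Rle; auto).
      assert (1 <= (Cmod rho ^ n) ^ 2)%R by nra. nra. }
    lra.
Qed.

Definition theta (p al s l : R) : R :=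
  ((al * al * (l * l) * (1 - p * p) - (al - s * l * p) * (al - s * l * p)) /
   (al * al * (l * l) * (1 - p * p) + (al - s * l * p) * (al - s * l * p)))%R.

Lemma Cmod_sq (z : C) : (Cmod z ^ 2 = Cmod z * Cmod z)%R.
Proof. ring. Qed.

Lemma neq0_of_sq (z : C) (r : R) : (Cmod z ^ 2 = r)%R -> (0 < r)%R -> z <> 0.
Proof. intros H Hr E. subst. rewrite Cmod_0 in Hr. lra. Qed.

Lemma RtoC_inj' (x y : R) : RtoC x = RtoC y -> x = y.
Proof. intros H. injection H. auto. Qed.

Lemma real_root (k : R) (l : C) : l * l - RtoC k * l - 1 = 0 ->
  exists r : R, l = RtoC r /\ (r * r - k * r - 1 = 0)%R.
Proof.
  intros H.
  set (s := sqrt (k * k + 4)).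
  assert (Hs : (s * s = k * k + 4)%R) by (apply sqrt_sqrt; nra).
  set (r1 := ((k + s) / 2)%R). set (r2 := ((k - s) / 2)%R).
  assert (Hsum : (r1 + r2 = k)%R) by (unfold r1, r2; field).
  assert (Hprod : (r1 * r2 = -1)%R) by (unfold r1, r2; field_simplify; rewrite ?Rmult_1_r; nra).
  assert (F : (l - RtoC r1) * (l - RtoC r2) = 0).
  { rewrite <- H.
    transitivity (l * l - RtoC (r1 + r2) * l + RtoC (r1 * r2)).
    - rewrite RtoC_addE, RtoC_mulE. ring.
    - rewrite Hsum, Hprod. apply injective_projections; simpl; ring. }
  destruct (Cmult_integral _ _ F) as [F1|F1].
  - exists r1. split.
    + transitivity (RtoC r1 + (l - RtoC r1)); [ring|]. rewrite F1. ring.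
    + nra.
  - exists r2. split.
    + transitivity (RtoC r2 + (l - RtoC r2)); [ring|]. rewrite F1. ring.
    + nra.
Qed.

Lemma sign_cases (s : R) : (s * s = 1)%R -> s = 1%R \/ s = (-1)%R.
Proof. intros H. assert ((s - 1) * (s + 1) = 0)%R by nra.
  destruct (Rmult_integral _ _ H0); [left|right]; lra. Qed.

Lemma lt_div (x y z : R) : (0 < z)%R -> (x * z < y)%R -> (x < y / z)%R.
Proof. intros Hz H. apply (Rmult_lt_reg_r z); auto. unfold Rdiv. rewrite Rmult_assoc, Rinv_l; lra. Qed.
Lemma div_lt (x y z : R) : (0 < z)%R -> (y < x * z)%R -> (y / z < x)%R.
Proof. intros Hz H. apply (Rmult_lt_reg_r z); auto. unfold Rdiv. rewrite Rmult_assoc, Rinv_l; lra. Qed.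
Lemma lt_div_inv (x y z : R) : (0 < z)%R -> (x < y / z)%R -> (x * z < y)%R.
Proof. intros Hz H. apply (Rmult_lt_compat_r z) in H; auto. unfold Rdiv in H. rewrite Rmult_assoc, Rinv_l in H; lra. Qed.
Lemma div_lt_inv (x y z : R) : (0 < z)%R -> (y / z < x)%R -> (y < x * z)%R.
Proof. intros Hz H. apply (Rmult_lt_compat_r z) in H; auto. unfold Rdiv in H. rewrite Rmult_assoc, Rinv_l in H; lra. Qed.

Lemma ineq_real1 (s a A B u w : R) : (s * s = 1)%R -> (-1 < a < 1)%R -> (0 < B)%R -> (0 <= A)%R ->
  (0 < w)%R -> (u * B = A * w)%R -> ((1 - a * a) * w < u * ((s - a) * (s - a)))%R ->
  (s * a < (A - B) / (A + B))%R.
Proof.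
  intros Hs Ha HB HA Hw Hu H.
  assert (H1 : ((1 - a * a) * B < A * ((s - a) * (s - a)))%R).
  { apply (Rmult_lt_reg_r w); auto.
    replace (A * ((s - a) * (s - a)) * w)%R with ((s - a) * (s - a) * (A * w))%R by ring.
    rewrite <- Hu. assert (0 < B * w)%R by nra. nra. }
  apply lt_div; [lra|].
  destruct (sign_cases s Hs); subst s.
  - assert (0 < 1 - a)%R by lra. nra.
  - assert (0 < 1 + a)%R by lra. nra.
Qed.

Lemma ineq_real2 (s a A B u w : R) : (s * s = 1)%R -> (-1 < a < 1)%R -> (0 < B)%R -> (0 <= A)%R ->
  (0 < w)%R -> (u * B = A * w)%R -> (u * ((s - a) * (s - a)) < (1 - a * a) * w)%R ->
  ((A - B) / (A + B) < s * a)%R.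
Proof.
  intros Hs Ha HB HA Hw Hu H.
  assert (H1 : (A * ((s - a) * (s - a)) < (1 - a * a) * B)%R).
  { apply (Rmult_lt_reg_r w); auto.
    replace (A * ((s - a) * (s - a)) * w)%R with ((s - a) * (s - a) * (A * w))%R by ring.
    rewrite <- Hu. assert (0 < B * w)%R by nra. nra. }
  apply div_lt; [lra|].
  destruct (sign_cases s Hs); subst s.
  - assert (0 < 1 - a)%R by lra. nra.
  - assert (0 < 1 + a)%R by lra. nra.
Qed.

Lemma ineq_real1' (s a A B : R) : (s * s = 1)%R -> (-1 < a < 1)%R -> (0 < B)%R -> (0 <= A)%R ->
  (s * a < (A - B) / (A + B))%R -> ((1 - a * a) * B < A * ((s - a) * (s - a)))%R.
Proof.
  intros Hs Ha HB HA H. apply lt_div_inv in H; [|lra].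
  destruct (sign_cases s Hs); subst s.
  - assert (0 < 1 - a)%R by lra. nra.
  - assert (0 < 1 + a)%R by lra. nra.
Qed.

Lemma ineq_real2' (s a A B : R) : (s * s = 1)%R -> (-1 < a < 1)%R -> (0 < B)%R -> (0 <= A)%R ->
  ((A - B) / (A + B) < s * a)%R -> (A * ((s - a) * (s - a)) < (1 - a * a) * B)%R.
Proof.
  intros Hs Ha HB HA H. apply div_lt_inv in H; [|lra].
  destruct (sign_cases s Hs); subst s.
  - assert (0 < 1 - a)%R by lra. nra.
  - assert (0 < 1 + a)%R by lra. nra.
Qed.

Lemma prod0 (a b : C) : a <> 0 -> a * b = 0 -> b = 0.
Proof. intros Ha H. destruct (Cmult_integral _ _ H); [contradiction|auto]. Qed.

Lemma core2 (p al be ap am : R) (q bp bm lam rp rm X Y : C) :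
  (al * be = 1)%R -> (0 < al)%R ->
  (-1 < ap < 1)%R -> (-1 < am < 1)%R -> (-1 < p < 1)%R ->
  (Cmod q ^ 2 = 1 - p ^ 2)%R -> (Cmod bp ^ 2 = 1 - ap ^ 2)%R -> (Cmod bm ^ 2 = 1 - am ^ 2)%R ->
  lam <> 0 -> (Cmod rp < 1)%R -> (Cmod rm < 1)%R ->
  Cconj bp * Y = rp * (lam * q * Y - (RtoC al * RtoC ap - lam * RtoC p) * X) ->
  bp * rp * X = lam * Cconj q * X - (lam * RtoC p - RtoC be * RtoC ap) * Y ->
  Cconj bm * rm * Y = lam * q * Y - (RtoC al * RtoC am - lam * RtoC p) * X ->
  bm * X = rm * (lam * Cconj q * X - (lam * RtoC p - RtoC be * RtoC am) * Y) ->
  X <> 0 \/ Y <> 0 ->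
  exists s l : R, (s * s = 1)%R /\ lam = RtoC l /\ (l * l - s * l * p * (al - be) - 1 = 0)%R /\
    (s * ap < theta p al s l)%R /\ (theta p al s l < s * am)%R.
Proof.
  intros Hab Hal Hap Ham Hp Hq Hbp Hbm Hlam Hrp Hrm R1 R2 R3 R4 HXY.
  assert (Hq0 : q <> 0) by (apply (neq0_of_sq q (1 - p ^ 2)); auto; nra).
  assert (Hbp0 : bp <> 0) by (apply (neq0_of_sq bp (1 - ap ^ 2)); auto; nra).
  assert (Hbm0 : bm <> 0) by (apply (neq0_of_sq bm (1 - am ^ 2)); auto; nra).
  assert (Hqc : q * Cconj q = RtoC (1 - p * p)) by (rewrite mul_conj, Hq; f_equal; ring).
  assert (Hbpc : bp * Cconj bp = RtoC (1 - ap * ap)) by (rewrite mul_conj, Hbp; f_equal; ring).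
  assert (Hbmc : bm * Cconj bm = RtoC (1 - am * am)) by (rewrite mul_conj, Hbm; f_equal; ring).
  assert (Hab' : RtoC al * RtoC be = 1) by (rewrite <- RtoC_mulE, Hab; reflexivity).
  assert (Hcq0 : Cconj q <> 0) by (intro E; apply Hq0; apply Cmod_eq_0; rewrite <- Cmod_conj, E; apply Cmod_0).
  assert (Hcbp0 : Cconj bp <> 0) by (intro E; apply Hbp0; apply Cmod_eq_0; rewrite <- Cmod_conj, E; apply Cmod_0).
  assert (Hcbm0 : Cconj bm <> 0) by (intro E; apply Hbm0; apply Cmod_eq_0; rewrite <- Cmod_conj, E; apply Cmod_0).
  assert (Hrp0 : rp <> 0).
  { intro E. subst rp. destruct HXY as [HX|HY].
    - apply HX. apply (prod0 (lam * Cconj q)). { apply Cmult_neq_0; auto. }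
      assert (Y = 0). { apply (prod0 (Cconj bp)); auto. rewrite R1. ring. }
      subst Y. transitivity (lam * Cconj q * X - (lam * RtoC p - RtoC be * RtoC ap) * 0); [ring|].
      rewrite <- R2. ring.
    - apply HY. apply (prod0 (Cconj bp)); auto. rewrite R1. ring. }
  assert (Hrm0 : rm <> 0).
  { intro E. subst rm. destruct HXY as [HX|HY].
    - apply HX. apply (prod0 bm); auto. rewrite R4. ring.
    - apply HY. apply (prod0 (lam * q)). { apply Cmult_neq_0; auto. }
      assert (X = 0). { apply (prod0 bm); auto. rewrite R4. ring. }
      subst X. transitivity (lam * q * Y - (RtoC al * RtoC am - lam * RtoC p) * 0); [ring|].
      rewrite <- R3. ring. }
  assert (Hp1 : RtoC (1 - ap * ap) * X * Y =
     (lam * q * Y - (RtoC al * RtoC ap - lam * RtoC p) * X) *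
     (lam * Cconj q * X - (lam * RtoC p - RtoC be * RtoC ap) * Y)).
  { apply (Cmult_eq_reg_l rp); auto. rewrite <- Hbpc. clear - R1 R2. nsatz. }
  assert (Hm1 : RtoC (1 - am * am) * X * Y =
     (lam * q * Y - (RtoC al * RtoC am - lam * RtoC p) * X) *
     (lam * Cconj q * X - (lam * RtoC p - RtoC be * RtoC am) * Y)).
  { apply (Cmult_eq_reg_l rm); auto. rewrite <- Hbmc. clear - R3 R4. nsatz. }
  assert (M1 := f_equal Cmod R1). assert (M2 := f_equal Cmod R2).
  assert (M3 := f_equal Cmod R3). assert (M4 := f_equal Cmod R4).
  rewrite !Cmod_mult, Cmod_conj in M1, M3. rewrite !Cmod_mult in M2, M4.
  pose proof (Cmod_ge_0 rp). pose proof (Cmod_ge_0 rm). pose proof (Cmod_ge_0 X). pose proof (Cmod_ge_0 Y).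
  pose proof (Cmod_ge_0 bp). pose proof (Cmod_ge_0 bm).
  destruct (Req_dec ap am) as [Eam|Eam].
  - exfalso. subst am.
    assert (Eb : Cmod bp = Cmod bm).
    { assert (Cmod bp * Cmod bp = Cmod bm * Cmod bm)%R by nra.
      apply Cmod_gt_0 in Hbp0. apply Cmod_gt_0 in Hbm0. nra. }
    destruct HXY as [HX|HY].
    + apply Cmod_gt_0 in HX. apply Cmod_gt_0 in Hbm0.
      set (Np := Cmod (lam * Cconj q * X - (lam * RtoC p - RtoC be * RtoC ap) * Y)) in *.
      assert (Cmod bm * Cmod X = Cmod rm * (Cmod bp * Cmod rp * Cmod X))%R by (rewrite M4, M2; ring).
      assert (0 < Cmod bm * Cmod X)%R by nra.
      assert (Cmod rm * Cmod rp < 1)%R by nra.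
      nra.
    + apply Cmod_gt_0 in HY. apply Cmod_gt_0 in Hbp0.
      set (Dp := Cmod (lam * q * Y - (RtoC al * RtoC ap - lam * RtoC p) * X)) in *.
      assert (E : (Cmod bp * Cmod Y = Cmod rp * (Cmod bm * Cmod rm * Cmod Y))%R) by (rewrite M1, <- M3; ring).
      rewrite <- Eb in E.
      assert (0 < Cmod bp * Cmod Y)%R by nra.
      assert (Cmod rm * Cmod rp < 1)%R by nra.
      assert (0 < Cmod bp * Cmod Y * (1 - Cmod rm * Cmod rp))%R by (apply Rmult_lt_0_compat; lra).
      nra.
  - assert (Hd : RtoC ap - RtoC am <> 0).
    { rewrite <- RtoC_subE. apply RtoC_neq. lra. }
    assert (K1 : RtoC be * Y * (lam * (q * Y + RtoC p * X)) - RtoC al * X * (lam * (Cconj q * X - RtoC p * Y)) = 0).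
    { apply (prod0 (RtoC ap - RtoC am)); auto.
      rewrite RtoC_subE in Hp1, Hm1. rewrite RtoC_mulE in Hp1, Hm1.
      clear - Hp1 Hm1 Hab'. nsatz. }
    assert (K0 : lam * (q * Y + RtoC p * X) * (lam * (Cconj q * X - RtoC p * Y)) - X * Y = 0).
    { rewrite RtoC_subE, RtoC_mulE in Hp1. clear - Hp1 K1 Hab'. nsatz. }
    assert (HX : X <> 0).
    { intro E. subst X. destruct HXY as [HX|HY]; [now apply HX|].
      apply HY. apply (prod0 (RtoC be * lam * q * Y)).
      - repeat apply Cmult_neq_0; auto; apply RtoC_neq; intro; nra.
      - rewrite <- K1. ring. }
    assert (HY : Y <> 0).
    { intro E. subst Y. apply HX. apply (prod0 (RtoC al * lam * Cconj q * X)).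
      - repeat apply Cmult_neq_0; auto; apply RtoC_neq; intro; nra.
      - transitivity (- (RtoC be * 0 * (lam * (q * 0 + RtoC p * X)) - RtoC al * X * (lam * (Cconj q * X - RtoC p * 0)))); [ring|].
        rewrite K1. ring. }
    assert (Hbe0 : RtoC be <> 0) by (apply RtoC_neq; intro; nra).
    assert (Hal0 : RtoC al <> 0) by (apply RtoC_neq; lra).
    assert (Sq : (lam*(q*Y + RtoC p*X) - RtoC al * X) * (lam*(q*Y+RtoC p*X) + RtoC al * X) = 0).
    { apply (prod0 (RtoC be * Y)); [apply Cmult_neq_0; auto|]. clear - K0 K1 Hab'. nsatz. }
    assert (Hs : exists s : R, (s*s = 1)%R /\ lam*(q*Y + RtoC p*X) = RtoC s * RtoC al * X).
    { destruct (Cmult_integral _ _ Sq) as [E|E]; [exists 1%R | exists (-1)%R]; split; try ring.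
      - transitivity (lam * (q * Y + RtoC p * X) - RtoC al * X + RtoC al * X); [ring|].
        rewrite E. ring.
      - transitivity (lam * (q * Y + RtoC p * X) + RtoC al * X - RtoC al * X); [ring|].
        rewrite E. apply injective_projections; simpl; ring. }
    destruct Hs as [s [Hs HD0]].
    assert (HsC : RtoC s * RtoC s = 1) by (rewrite <- RtoC_mulE, Hs; reflexivity).
    assert (HN0 : lam * (Cconj q * X - RtoC p * Y) = RtoC s * RtoC be * Y).
    { apply (Cmult_eq_reg_l (RtoC al * X)); [apply Cmult_neq_0; auto|]. clear - K1 HD0 Hab'. nsatz. }
    assert (Quad : lam * lam - RtoC (s * p * (al - be)) * lam - 1 = 0).
    { apply (prod0 (X * Y)); [apply Cmult_neq_0; auto|]. rewrite !RtoC_mulE, RtoC_subE.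
      rewrite RtoC_subE, RtoC_mulE in Hqc.
      clear - HD0 HN0 Hqc HsC Hab'. nsatz. }
    destruct (real_root _ _ Quad) as [l [Hl Hlq]]. subst lam.
    assert (Hl0 : l <> 0%R) by (intro; subst; nra).
    assert (HXr : X * RtoC (s * al - l * p) = RtoC l * q * Y).
    { rewrite RtoC_subE, !RtoC_mulE. clear - HD0. nsatz. }
    assert (HDp : RtoC l * q * Y - (RtoC al * RtoC ap - RtoC l * RtoC p) * X = RtoC al * X * RtoC (s - ap)).
    { rewrite RtoC_subE. clear - HD0. nsatz. }
    assert (HDm : RtoC l * q * Y - (RtoC al * RtoC am - RtoC l * RtoC p) * X = RtoC al * X * RtoC (s - am)).
    { rewrite RtoC_subE. clear - HD0. nsatz. }
    rewrite HDp in M1. rewrite HDm in M3.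
    rewrite !Cmod_mult, !Cmod_R in M1, M3.
    assert (Fx := f_equal Cmod HXr). rewrite !Cmod_mult, !Cmod_R in Fx.
    rewrite (Rabs_pos_eq al) in M1, M3 by lra.
    set (x := Cmod X) in *. set (y := Cmod Y) in *.
    assert (Hy : (0 < y)%R) by (apply Cmod_gt_0; auto).
    assert (Hx : (0 < x)%R) by (apply Cmod_gt_0; auto).
    assert (Hbp' : (0 < Cmod bp)%R) by (apply Cmod_gt_0; auto).
    assert (Hbm' : (0 < Cmod bm)%R) by (apply Cmod_gt_0; auto).
    assert (Hq' : (0 < Cmod q)%R) by (apply Cmod_gt_0; auto).
    assert (Habs : forall t : R, (Rabs t * Rabs t = t * t)%R).
    { intros t. rewrite <- Rabs_mult. apply Rabs_pos_eq. nra. }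
    assert (Hlabs : (0 < Rabs l)%R) by (apply Rabs_pos_lt; auto).
    pose proof (Rabs_pos (s - ap)). pose proof (Rabs_pos (s - am)). pose proof (Rabs_pos (s * al - l * p)).
    assert (Ineqp : ((1 - ap * ap) * (y * y) < al * al * (x * x) * ((s - ap) * (s - ap)))%R).
    { set (Dp := (al * x * Rabs (s - ap))%R) in *.
      assert (0 <= Dp)%R by (unfold Dp; apply Rmult_le_pos; nra).
      assert (0 < Dp)%R by nra.
      assert (Dp * Cmod rp < Dp * 1)%R by (apply Rmult_lt_compat_l; lra).
      assert (Cmod bp * y < Dp)%R by nra.
      assert (Dp * Dp = al * al * (x * x) * ((s - ap) * (s - ap)))%R by (unfold Dp; rewrite <- (Habs (s - ap)%R); ring).
      assert (Cmod bp * Cmod bp = 1 - ap * ap)%R by (transitivity (Cmod bp ^ 2)%R; [ring | rewrite Hbp; ring]).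
      assert (0 < Cmod bp * y)%R by nra. nra. }
    assert (Ineqm : (al * al * (x * x) * ((s - am) * (s - am)) < (1 - am * am) * (y * y))%R).
    { set (Dm := (al * x * Rabs (s - am))%R) in *.
      assert (0 <= Dm)%R by (unfold Dm; apply Rmult_le_pos; nra).
      assert (0 < Cmod bm * y)%R by nra.
      assert (Cmod bm * y * Cmod rm < Cmod bm * y * 1)%R by (apply Rmult_lt_compat_l; lra).
      assert (Dm < Cmod bm * y)%R by (rewrite <- M3; nra).
      assert (Dm * Dm = al * al * (x * x) * ((s - am) * (s - am)))%R by (unfold Dm; rewrite <- (Habs (s - am)%R); ring).
      assert (Cmod bm * Cmod bm = 1 - am * am)%R by (transitivity (Cmod bm ^ 2)%R; [ring | rewrite Hbm; ring]).
      nra. }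
    assert (HB : (0 < (al - s * l * p) * (al - s * l * p))%R).
    { assert (al - s * l * p <> 0)%R.
      { intro E. assert (Es : (s * (al - s * l * p) = s * al - (s * s) * l * p)%R) by ring.
        rewrite Hs, E in Es. replace (s * al - l * p)%R with 0%R in Fx by lra.
        rewrite Rabs_R0 in Fx.
        assert (0 < Rabs l * Cmod q * y)%R by (repeat apply Rmult_lt_0_compat; auto). lra. }
      nra. }
    assert (HA : (0 <= al * al * (l * l) * (1 - p * p))%R).
    { assert (0 <= 1 - p * p)%R by nra. assert (0 <= al * al * (l * l))%R by nra. nra. }
    assert (Huw : (al * al * (x * x) * ((al - s * l * p) * (al - s * l * p)) =
                   al * al * (l * l) * (1 - p * p) * (y * y))%R).
    { assert (E : (x * Rabs (s * al - l * p) * (x * Rabs (s * al - l * p)) =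
                   Rabs l * Cmod q * y * (Rabs l * Cmod q * y))%R) by (rewrite Fx; ring).
      replace (x * Rabs (s * al - l * p) * (x * Rabs (s * al - l * p)))%R with
        (x * x * (Rabs (s * al - l * p) * Rabs (s * al - l * p)))%R in E by ring.
      replace (Rabs l * Cmod q * y * (Rabs l * Cmod q * y))%R with
        (Rabs l * Rabs l * (Cmod q * Cmod q) * (y * y))%R in E by ring.
      rewrite !Habs in E. replace (Cmod q * Cmod q)%R with (1 - p * p)%R in E by (transitivity (Cmod q ^ 2)%R; [rewrite Hq; ring | ring]).
      assert ((s * al - l * p) * (s * al - l * p) = (al - s * l * p) * (al - s * l * p))%R.
      { transitivity ((al - s * l * p) * (al - s * l * p) + (s * s - 1) * (al * al - l * l * p * p))%R; [ring|].
        rewrite Hs. ring. }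
      nra. }
    exists s, l. split; [auto|]. split; [auto|]. split; [nra|]. split.
    + unfold theta. apply (ineq_real1 s ap _ _ (al * al * (x * x)) (y * y)); auto; nra.
    + unfold theta. apply (ineq_real2 s am _ _ (al * al * (x * x)) (y * y)); auto; nra.
Qed.

Lemma div_eq (x y z w : R) : y <> 0%R -> w <> 0%R -> (x * w = z * y)%R -> (x / y = z / w)%R.
Proof.
  intros Hy Hw H. unfold Rdiv.
  apply (Rmult_eq_reg_r (y * w)). 2: now apply Rmult_integral_contrapositive.
  replace (x * / y * (y * w))%R with (x * w * (y * / y))%R by ring.
  replace (z * / w * (y * w))%R with (z * y * (w * / w))%R by ring.
  rewrite !Rinv_r by auto. rewrite H. ring.
Qed.

Section Conv.
Variables (gamma p : R) (q : C).
Hypothesis Hp : (-1 < p < 1)%R.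
Hypothesis Hq : (p ^ 2 + Cmod q ^ 2 = 1)%R.

Let al := exp (-2 * gamma).
Let be := exp (2 * gamma).
Let S := (p * sinh (2 * gamma))%R.
Let Rr := sqrt (1 + S ^ 2).
Let c := cosh (2 * gamma).

Lemma al_be : (al * be = 1)%R.
Proof. unfold al, be. rewrite <- exp_plus. replace (-2 * gamma + 2 * gamma)%R with 0%R by ring. apply exp_0. Qed.
Lemma al_pos : (0 < al)%R.
Proof. apply exp_pos. Qed.
Lemma S_eq : (2 * S = p * (be - al))%R.
Proof. unfold S, sinh, be, al. replace (- (2 * gamma))%R with (-2 * gamma)%R by ring. field. Qed.
Lemma c_eq : (2 * c = al + be)%R.
Proof. unfold c, cosh, be, al. replace (- (2 * gamma))%R with (-2 * gamma)%R by ring. field. Qed.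
Lemma Rr_sq : (Rr * Rr = 1 + S * S)%R.
Proof. unfold Rr. rewrite sqrt_sqrt; [ring|]. nra. Qed.
Lemma Rr_pos : (0 < Rr)%R.
Proof. unfold Rr. apply sqrt_lt_R0. nra. Qed.
Lemma c_pos : (0 < c)%R.
Proof. pose proof c_eq. pose proof al_pos. assert (0 < be)%R by (unfold be; apply exp_pos). lra. Qed.

Lemma pgam_eq : p_gamma' gamma p q = (p * c / Rr)%R.
Proof.
  unfold p_gamma'. fold c.
  assert (Hc := c_pos). assert (HR := Rr_pos).
  assert (E : (p ^ 2 + Cmod q ^ 2 / c ^ 2 = (Rr / c) * (Rr / c))%R).
  { replace (Cmod q ^ 2)%R with (1 - p ^ 2)%R by lra.
    replace ((Rr / c) * (Rr / c))%R with ((Rr * Rr) / (c * c))%R by (field; lra).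
    rewrite Rr_sq. unfold S.
    assert (Hcs : (c * c - sinh (2 * gamma) * sinh (2 * gamma) = 1)%R).
    { unfold c, cosh, sinh. 
      replace ((exp (2 * gamma) + exp (- (2 * gamma))) / 2 * ((exp (2 * gamma) + exp (- (2 * gamma))) / 2) -
        (exp (2 * gamma) - exp (- (2 * gamma))) / 2 * ((exp (2 * gamma) - exp (- (2 * gamma))) / 2))%R
        with (exp (2 * gamma) * exp (- (2 * gamma)))%R by field.
      rewrite <- exp_plus. replace (2 * gamma + - (2 * gamma))%R with 0%R by ring. apply exp_0. }
    field_simplify_eq; [|lra]. nra. }
  rewrite E. rewrite sqrt_square by (apply Rlt_le; apply Rdiv_lt_0_compat; lra).
  field. split; lra.
Qed.

Lemma quad_roots_R (s l : R) : (s * s = 1)%R ->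
  (l * l - s * l * p * (al - be) - 1 = 0)%R <-> (l = - s * S + Rr \/ l = - s * S - Rr)%R.
Proof.
  intros Hs. pose proof S_eq as HS. pose proof Rr_sq as HR.
  assert (Hpab : (p * (al - be) = -2 * S)%R) by lra.
  assert (E0 : (l * l - s * l * p * (al - be) - 1 = (l + s * S - Rr) * (l + s * S + Rr))%R).
  { clear - Hpab HR Hs. nsatz. }
  rewrite E0. split.
  - intros E. destruct (Rmult_integral _ _ E); [left|right]; lra.
  - intros [E|E]; rewrite E; ring.
Qed.

Lemma theta_val (s t : R) : (s * s = 1)%R -> (t * t = 1)%R ->
  theta p al s (- s * S + t * Rr) = (s * t * p_gamma' gamma p q)%R.
Proof.
  intros Hs Ht. rewrite pgam_eq. unfold theta.
  pose proof al_be as Hab. pose proof S_eq as HS. pose proof c_eq as Hc. pose proof Rr_sq as HR.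
  pose proof Rr_pos as HRp. pose proof al_pos as Hal.
  set (l := (- s * S + t * Rr)%R).
  assert (Hl : l <> 0%R).
  { intro E. unfold l in E. assert (t * Rr = s * S)%R by lra.
    assert (t * Rr * (t * Rr) = s * S * (s * S))%R by (rewrite H; ring).
    replace (t * Rr * (t * Rr))%R with ((t * t) * (Rr * Rr))%R in H0 by ring.
    replace (s * S * (s * S))%R with ((s * s) * (S * S))%R in H0 by ring.
    rewrite Hs, Ht, HR in H0. lra. }
  replace (s * t * (p * c / Rr))%R with ((s * t * p * c) / Rr)%R by (field; lra).
  apply div_eq.
  - assert (0 < al * al * (l * l) * (1 - p * p))%R.
    { assert (0 < l * l)%R by (apply Rsqr_pos_lt; auto). assert (0 < 1 - p * p)%R by nra.
      assert (0 < al * al)%R by nra. apply Rmult_lt_0_compat; [apply Rmult_lt_0_compat|]; auto. }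
    assert (0 <= (al - s * l * p) * (al - s * l * p))%R by (apply Rle_0_sqr). lra.
  - lra.
  - assert (Hl' : l = (- s * S + t * Rr)%R) by reflexivity. clearbody l.
    clear - Hab HS Hc HR Hl' Hs Ht. nsatz.
Qed.

Lemma lp_S : lambda_plus S = (S + Rr)%R.
Proof. reflexivity. Qed.
Lemma lp_mS : lambda_plus (- S) = (- S + Rr)%R.
Proof. unfold lambda_plus, Rr. replace ((- S) ^ 2)%R with (S ^ 2)%R by ring. reflexivity. Qed.
Lemma lm_S : lambda_minus S = (S - Rr)%R.
Proof. reflexivity. Qed.
Lemma lm_mS : lambda_minus (- S) = (- S - Rr)%R.
Proof. unfold lambda_minus, Rr. replace ((- S) ^ 2)%R with (S ^ 2)%R by ring. reflexivity. Qed.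

Lemma conv_fwd (ap am : R) (lam : C) (s l : R) : (s * s = 1)%R ->
  (l * l - s * l * p * (al - be) - 1 = 0)%R ->
  (s * ap < theta p al s l)%R -> (theta p al s l < s * am)%R -> lam = RtoC l ->
  in_sigma_minus gamma p q ap am lam \/ in_sigma_plus gamma p q ap am lam.
Proof.
  intros Hs Hquad H1 H2 ->.
  unfold in_sigma_minus, in_sigma_plus. change (p * sinh (2 * gamma))%R with S.
  rewrite lp_S, lp_mS, lm_S, lm_mS.
  apply quad_roots_R in Hquad; auto.
  destruct Hquad as [E|E].
  - replace l with (- s * S + 1 * Rr)%R in H1, H2 by (rewrite E; ring).
    rewrite theta_val in H1, H2 by (auto; ring).
    destruct (sign_cases s Hs); subst s.
    + right. right. split; [lra|]. f_equal. rewrite E. ring.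
    + right. left. split; [lra|]. f_equal. rewrite E. ring.
  - replace l with (- s * S + (-1) * Rr)%R in H1, H2 by (rewrite E; ring).
    rewrite theta_val in H1, H2 by (auto; ring).
    destruct (sign_cases s Hs); subst s.
    + left. right. split; [lra|]. f_equal. rewrite E. ring.
    + left. left. split; [lra|]. f_equal. rewrite E. ring.
Qed.

Lemma conv_bwd (ap am : R) (lam : C) :
  in_sigma_minus gamma p q ap am lam \/ in_sigma_plus gamma p q ap am lam ->
  exists s l : R, (s * s = 1)%R /\ lam = RtoC l /\ (l * l - s * l * p * (al - be) - 1 = 0)%R /\
    (s * ap < theta p al s l)%R /\ (theta p al s l < s * am)%R.
Proof.
  unfold in_sigma_minus, in_sigma_plus. change (p * sinh (2 * gamma))%R with S.
  rewrite lp_S, lp_mS, lm_S, lm_mS.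
  intros [[[H E]|[H E]]|[[H E]|[H E]]].
  -
    exists (-1)%R, (S - Rr)%R. split; [ring|]. split; [auto|]. split.
    + apply quad_roots_R; [ring|]. right. ring.
    + replace (S - Rr)%R with (- (-1) * S + (-1) * Rr)%R by ring.
      rewrite theta_val by ring. lra.
  - exists 1%R, (- S - Rr)%R. split; [ring|]. split; [auto|]. split.
    + apply quad_roots_R; [ring|]. right. ring.
    + replace (- S - Rr)%R with (- 1 * S + (-1) * Rr)%R by ring.
      rewrite theta_val by ring. lra.
  - exists (-1)%R, (S + Rr)%R. split; [ring|]. split; [auto|]. split.
    + apply quad_roots_R; [ring|]. left. ring.
    + replace (S + Rr)%R with (- (-1) * S + 1 * Rr)%R by ring.
      rewrite theta_val by ring. lra.
  - exists 1%R, (- S + Rr)%R. split; [ring|]. split; [auto|]. split.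
    + apply quad_roots_R; [ring|]. left. ring.
    + replace (- S + Rr)%R with (- 1 * S + 1 * Rr)%R by ring.
      rewrite theta_val by ring. lra.
Qed.
End Conv.

Lemma tp_pos {T} (vp vm : T) (x : Z) : (0 <= x)%Z -> two_phase vp vm x = vp.
Proof. intros H. unfold two_phase. destruct (Z.leb_spec 0 x); [auto|lia]. Qed.
Lemma tp_neg {T} (vp vm : T) (x : Z) : (x < 0)%Z -> two_phase vp vm x = vm.
Proof. intros H. unfold two_phase. destruct (Z.leb_spec 0 x); [lia|auto]. Qed.

Lemma Cmod_det_eq (x y z : C) : Cmod (0 * x - y * Cconj z) = Cmod (Cconj y * z - 0 * x).
Proof.
  replace (0 * x - y * Cconj z) with (- (y * Cconj z)) by ring.
  replace (Cconj y * z - 0 * x) with (Cconj y * z) by ring.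
  rewrite Cmod_opp, !Cmod_mult, !Cmod_conj. ring.
Qed.

Lemma fwd (gamma p : R) (q : C) (ap am : R) (bp bm : C) :
  (-1 < p < 1)%R -> (p ^ 2 + (Cmod q) ^ 2 = 1)%R ->
  (-1 < ap < 1)%R -> (-1 < am < 1)%R ->
  (ap ^ 2 + (Cmod bp) ^ 2 = 1)%R -> (am ^ 2 + (Cmod bm) ^ 2 = 1)%R ->
  forall lam : C, in_point_spectrum gamma p q ap am bp bm lam ->
  exists s l : R, (s * s = 1)%R /\ lam = RtoC l /\
    (l * l - s * l * p * (exp (-2 * gamma) - exp (2 * gamma)) - 1 = 0)%R /\
    (s * ap < theta p (exp (-2 * gamma)) s l)%R /\ (theta p (exp (-2 * gamma)) s l < s * am)%R.
Proof.
  intros Hp Hpq Hap Ham Hbp Hbm lam [Psi [Hl2 [[x0 Hx0] Heig]]].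
  set (al := exp (-2 * gamma)). set (be := exp (2 * gamma)).
  assert (Hab : (al * be = 1)%R).
  { unfold al, be. rewrite <- exp_plus. replace (-2 * gamma + 2 * gamma)%R with 0%R by ring. apply exp_0. }
  assert (Hal : (0 < al)%R) by apply exp_pos.
  assert (Hab' : RtoC al * RtoC be = 1) by (rewrite <- RtoC_mulE, Hab; reflexivity).
  pose proof (ce_of_eig gamma p q (two_phase ap am) (two_phase bp bm) Hpq lam Psi Heig) as CE.
  clear Heig. unfold CE1, CE2 in CE. fold al be in CE.
  assert (Hq0 : q <> 0) by (apply (neq0_of_sq q (1 - p ^ 2)); [lra|nra]).
  assert (Hbp0 : bp <> 0) by (apply (neq0_of_sq bp (1 - ap ^ 2)); [lra|nra]).
  assert (Hbm0 : bm <> 0) by (apply (neq0_of_sq bm (1 - am ^ 2)); [lra|nra]).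
  assert (Hcq0 : Cconj q <> 0) by (intro E; apply Hq0; apply Cmod_eq_0; rewrite <- Cmod_conj, E; apply Cmod_0).
  assert (Hcbp0 : Cconj bp <> 0) by (intro E; apply Hbp0; apply Cmod_eq_0; rewrite <- Cmod_conj, E; apply Cmod_0).
  assert (Hcbm0 : Cconj bm <> 0) by (intro E; apply Hbm0; apply Cmod_eq_0; rewrite <- Cmod_conj, E; apply Cmod_0).
  assert (Hlam : lam <> 0).
  { intro E. subst lam. apply Hx0.
    destruct (CE x0) as [C1 C2].
    assert (Hn : ((two_phase ap am x0) ^ 2 + Cmod (two_phase bp bm x0) ^ 2 = 1)%R)
      by (unfold two_phase; destruct (0 <=? x0)%Z; auto).
    set (a := two_phase ap am x0) in *. set (b := two_phase bp bm x0) in *.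
    assert (Hbb : b * Cconj b = RtoC 1 - RtoC a * RtoC a).
    { rewrite mul_conj, <- RtoC_mulE, <- RtoC_subE. f_equal. lra. }
    rewrite !RtoC_mulE in C1, C2.
    apply injective_projections; simpl; clear - C1 C2 Hbb Hab'; nsatz. }
  assert (Right : exists rp, (Cmod rp < 1)%R /\ forall n,
     fst (Psi (Z.of_nat (S n))) = rp * fst (Psi (Z.of_nat n)) /\
     snd (Psi (Z.of_nat (S n))) = rp * snd (Psi (Z.of_nat n))).
  { apply (half_line 0 (lam * q) bp (lam * RtoC p - RtoC be * RtoC ap)
                     (RtoC al * RtoC ap - lam * RtoC p) (Cconj bp) (lam * Cconj q) 0
                     (fun n => fst (Psi (Z.of_nat n))) (fun n => snd (Psi (Z.of_nat n)))).
    - replace (0 * (lam * RtoC p - RtoC be * RtoC ap) - lam * q * bp) with (- (lam * q * bp)) by ring.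
      intro E. assert (E' : lam * q * bp = 0) by (transitivity (- - (lam * q * bp)); [ring|]; rewrite E; ring).
      revert E'. repeat apply Cmult_neq_0; auto.
    - replace ((RtoC al * RtoC ap - lam * RtoC p) * 0 - Cconj bp * (lam * Cconj q)) with (- (Cconj bp * (lam * Cconj q))) by ring.
      replace (0 * (lam * RtoC p - RtoC be * RtoC ap) - lam * q * bp) with (- (lam * q * bp)) by ring.
      rewrite !Cmod_opp, !Cmod_mult, !Cmod_conj. ring.
    - intros n. destruct (CE (Z.of_nat n)) as [C1 _]. destruct (CE (Z.of_nat (S n))) as [_ C2].
      rewrite !tp_pos in C1 by lia. rewrite !tp_pos in C2 by lia.
      replace (Z.of_nat n + 1)%Z with (Z.of_nat (S n)) in C1 by lia.
      replace (Z.of_nat (S n) - 1)%Z with (Z.of_nat n) in C2 by lia.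
      rewrite RtoC_mulE in C1, C2. simpl.
      split; [clear - C1 | clear - C2]; nsatz.
    - exact (ex_series_lim_0 _ (proj1 Hl2)). }
  assert (Left : exists rm, (Cmod rm < 1)%R /\ forall n,
     fst (Psi (- Z.of_nat (S n) - 1)%Z) = rm * fst (Psi (- Z.of_nat n - 1)%Z) /\
     snd (Psi (- Z.of_nat (S n) - 1)%Z) = rm * snd (Psi (- Z.of_nat n - 1)%Z)).
  { apply (half_line (lam * Cconj q) 0 (RtoC al * RtoC am - lam * RtoC p) (Cconj bm)
                     bm (lam * RtoC p - RtoC be * RtoC am) 0 (lam * q)
                     (fun n => fst (Psi (- Z.of_nat n - 1)%Z)) (fun n => snd (Psi (- Z.of_nat n - 1)%Z))).
    - replace (lam * Cconj q * Cconj bm - 0 * (RtoC al * RtoC am - lam * RtoC p)) with (lam * Cconj q * Cconj bm) by ring.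
      repeat apply Cmult_neq_0; auto.
    - replace (bm * (lam * q) - (lam * RtoC p - RtoC be * RtoC am) * 0) with (bm * (lam * q)) by ring.
      replace (lam * Cconj q * Cconj bm - 0 * (RtoC al * RtoC am - lam * RtoC p)) with (lam * Cconj q * Cconj bm) by ring.
      rewrite !Cmod_mult, !Cmod_conj. ring.
    - intros n. destruct (CE (- Z.of_nat n - 1)%Z) as [_ C2]. destruct (CE (- Z.of_nat (S n) - 1)%Z) as [C1 _].
      rewrite !tp_neg in C1 by lia. rewrite !tp_neg in C2 by lia.
      replace (- Z.of_nat (S n) - 1 + 1)%Z with (- Z.of_nat n - 1)%Z in C1 by lia.
      replace (- Z.of_nat n - 1 - 1)%Z with (- Z.of_nat (S n) - 1)%Z in C2 by lia.
      rewrite RtoC_mulE in C1, C2. simpl.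
      split; [clear - C2 | clear - C1]; nsatz.
    - exact (ex_series_lim_0 _ (proj2 Hl2)). }
  destruct Right as [rp [Hrp Hr]]. destruct Left as [rm [Hrm Hl]].
  destruct (Hr 0%nat) as [Hr1 Hr2]. destruct (Hl 0%nat) as [Hl1 Hlm2].
  change (Z.of_nat 1) with 1%Z in Hr1, Hr2. change (Z.of_nat 0) with 0%Z in Hr1, Hr2.
  change (- Z.of_nat 1 - 1)%Z with (-2)%Z in Hl1, Hlm2. change (- Z.of_nat 0 - 1)%Z with (-1)%Z in Hl1, Hlm2.
  destruct (CE 0%Z) as [E1 E6]. destruct (CE 1%Z) as [_ E2]. destruct (CE (-2)%Z) as [E3 _].
  destruct (CE (-1)%Z) as [E5 E4].
  change (0 + 1)%Z with 1%Z in E1. change (0 - 1)%Z with (-1)%Z in E6. change (1 - 1)%Z with 0%Z in E2.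
  change (-2 + 1)%Z with (-1)%Z in E3. change (-1 + 1)%Z with 0%Z in E5. change (-1 - 1)%Z with (-2)%Z in E4.
  rewrite (tp_pos ap am) in E1, E6, E2 by lia. rewrite (tp_pos bp bm) in E1, E6, E2 by lia.
  rewrite (tp_neg ap am) in E3, E5, E4 by lia. rewrite (tp_neg bp bm) in E3, E5, E4 by lia.
  rewrite RtoC_mulE in E1, E2, E3, E4, E5, E6.
  rewrite Hr1, Hr2 in E2. rewrite Hr2 in E1. rewrite Hl1, Hlm2 in E3. rewrite Hl1 in E4.
  set (P1 := fst (Psi 0%Z)) in *. set (P2 := snd (Psi 0%Z)) in *.
  set (M1 := fst (Psi (-1)%Z)) in *. set (M2 := snd (Psi (-1)%Z)) in *.
  assert (HP1 : P1 = rp * M1).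
  { assert (E : lam * Cconj q * (P1 - rp * M1) = 0) by (clear - E2 E6; nsatz).
    apply prod0 in E; [|apply Cmult_neq_0; auto].
    transitivity (rp * M1 + (P1 - rp * M1)); [ring|]. rewrite E. ring. }
  assert (HM2 : M2 = rm * P2).
  { assert (E : lam * q * (M2 - rm * P2) = 0) by (clear - E3 E5; nsatz).
    apply prod0 in E; [|apply Cmult_neq_0; auto].
    transitivity (rm * P2 + (M2 - rm * P2)); [ring|]. rewrite E. ring. }
  apply (core2 p al be ap am q bp bm lam rp rm M1 P2); auto; try lra.
  - rewrite HP1 in E1. clear - E1. nsatz.
  - rewrite HP1 in E6. clear - E6. nsatz.
  - rewrite HM2 in E5. clear - E5. nsatz.
  - rewrite HM2 in E4. clear - E4. nsatz.
  - destruct (Ceq_dec M1 0) as [Z1|Z1]; [|left; auto].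
    destruct (Ceq_dec P2 0) as [Z2|Z2]; [|right; auto].
    exfalso. apply Hx0.
    assert (HPos : forall n, Psi (Z.of_nat n) = (RtoC 0, RtoC 0)).
    { induction n as [|n IH].
      - change (Z.of_nat 0) with 0%Z. apply injective_projections; simpl.
        + fold P1. rewrite HP1, Z1. ring.
        + fold P2. auto.
      - destruct (Hr n) as [A1 A2]. rewrite IH in A1, A2. simpl in A1, A2.
        apply injective_projections; simpl; [rewrite A1 | rewrite A2]; ring. }
    assert (HNeg : forall n, Psi (- Z.of_nat n - 1)%Z = (RtoC 0, RtoC 0)).
    { induction n as [|n IH].
      - change (- Z.of_nat 0 - 1)%Z with (-1)%Z. apply injective_projections; simpl.
        + fold M1. auto.
        + fold M2. rewrite HM2, Z2. ring.
      - destruct (Hl n) as [A1 A2]. rewrite IH in A1, A2. simpl in A1, A2.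
        apply injective_projections; simpl; [rewrite A1 | rewrite A2]; ring. }
    destruct (Z_le_gt_dec 0 x0) as [Hx|Hx].
    + replace x0 with (Z.of_nat (Z.to_nat x0)) by lia. apply HPos.
    + replace x0 with (- Z.of_nat (Z.to_nat (- x0 - 1)) - 1)%Z by lia. apply HNeg.
Qed.
Lemma div_lt1 (x y : R) : (0 <= x)%R -> (x < y)%R -> (x / y < 1)%R.
Proof. intros H1 H2. apply div_lt; lra. Qed.

Lemma Cpow_S' (c : C) (n : nat) : Cpow c (S n) = c * Cpow c n.
Proof. reflexivity. Qed.

Lemma bwd (gamma p : R) (q : C) (ap am : R) (bp bm : C) :
  (-1 < p < 1)%R -> (p ^ 2 + (Cmod q) ^ 2 = 1)%R ->
  (-1 < ap < 1)%R -> (-1 < am < 1)%R ->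
  (ap ^ 2 + (Cmod bp) ^ 2 = 1)%R -> (am ^ 2 + (Cmod bm) ^ 2 = 1)%R ->
  forall s l : R, (s * s = 1)%R ->
    (l * l - s * l * p * (exp (-2 * gamma) - exp (2 * gamma)) - 1 = 0)%R ->
    (s * ap < theta p (exp (-2 * gamma)) s l)%R -> (theta p (exp (-2 * gamma)) s l < s * am)%R ->
  in_point_spectrum gamma p q ap am bp bm (RtoC l).
Proof.
  intros Hp Hpq Hap Ham Hbp Hbm s l Hs Hquad H1 H2.
  set (al := exp (-2 * gamma)) in *. set (be := exp (2 * gamma)) in *.
  assert (Hab : (al * be = 1)%R).
  { unfold al, be. rewrite <- exp_plus. replace (-2 * gamma + 2 * gamma)%R with 0%R by ring. apply exp_0. }
  assert (Hal : (0 < al)%R) by apply exp_pos.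
  assert (Hab' : RtoC al * RtoC be = 1) by (rewrite <- RtoC_mulE, Hab; reflexivity).
  assert (Hq0 : q <> 0) by (apply (neq0_of_sq q (1 - p ^ 2)); [lra|nra]).
  assert (Hbp0 : bp <> 0) by (apply (neq0_of_sq bp (1 - ap ^ 2)); [lra|nra]).
  assert (Hbm0 : bm <> 0) by (apply (neq0_of_sq bm (1 - am ^ 2)); [lra|nra]).
  assert (Hcbp0 : Cconj bp <> 0) by (intro E; apply Hbp0; apply Cmod_eq_0; rewrite <- Cmod_conj, E; apply Cmod_0).
  assert (Hcbm0 : Cconj bm <> 0) by (intro E; apply Hbm0; apply Cmod_eq_0; rewrite <- Cmod_conj, E; apply Cmod_0).
  assert (Hqc : q * Cconj q = RtoC 1 - RtoC p * RtoC p).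
  { rewrite mul_conj, <- RtoC_mulE, <- RtoC_subE. f_equal. lra. }
  assert (Hbpc : bp * Cconj bp = RtoC 1 - RtoC ap * RtoC ap).
  { rewrite mul_conj, <- RtoC_mulE, <- RtoC_subE. f_equal. lra. }
  assert (Hbmc : bm * Cconj bm = RtoC 1 - RtoC am * RtoC am).
  { rewrite mul_conj, <- RtoC_mulE, <- RtoC_subE. f_equal. lra. }
  assert (HsC : RtoC s * RtoC s = 1) by (rewrite <- RtoC_mulE, Hs; reflexivity).
  assert (Hl0 : l <> 0%R) by (intro; subst; nra).
  assert (HK : (s * al - l * p <> 0)%R).
  { intro E. assert (E2 : (al * al * (1 - p * p) = 0)%R).
    { assert (Elp : (l * p = s * al)%R) by lra. clear - Elp Hquad Hs Hab. nsatz. }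
    assert (0 < al * al * (1 - p * p))%R.
    { apply Rmult_lt_0_compat; [nra|nra]. }
    lra. }
  assert (HKC : RtoC (s * al - l * p) <> 0) by (apply RtoC_neq; auto).
  assert (HquadC : RtoC l * RtoC l - RtoC s * RtoC l * RtoC p * (RtoC al - RtoC be) - 1 = 0).
  { transitivity (RtoC (l * l - s * l * p * (al - be) - 1)).
    - apply injective_projections; simpl; ring.
    - rewrite Hquad. reflexivity. }
  set (X := RtoC l * q / RtoC (s * al - l * p)).
  assert (HXK : X * RtoC (s * al - l * p) = RtoC l * q) by (unfold X; field; auto).
  rewrite RtoC_subE, !RtoC_mulE in HXK.
  assert (HX0 : X <> 0).
  { intro E. rewrite E in HXK. assert (RtoC l * q = 0) by (rewrite <- HXK; ring).
    apply Cmult_integral in H. destruct H; [apply (RtoC_neq l); auto|auto]. }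
  set (D := fun a : R => RtoC al * X * RtoC (s - a)).
  assert (HD : forall a : R, RtoC l * q - (RtoC al * RtoC a - RtoC l * RtoC p) * X = D a).
  { intros a. unfold D. rewrite RtoC_subE. clear - HXK HsC. nsatz. }
  assert (HN : forall a : R, (RtoC 1 - RtoC a * RtoC a) * X =
     D a * (RtoC l * Cconj q * X - (RtoC l * RtoC p - RtoC be * RtoC a))).
  { assert (HN0 : RtoC l * Cconj q * X - RtoC l * RtoC p = RtoC s * RtoC be).
    { apply (Cmult_eq_reg_l (RtoC (s * al - l * p))); auto. rewrite RtoC_subE, !RtoC_mulE.
      clear - HXK HsC Hab' Hqc HquadC. nsatz. }
    intros a. unfold D. rewrite RtoC_subE.
    clear - HN0 HsC Hab'. nsatz. }
  assert (HDp0 : D ap <> 0).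
  { unfold D. apply Cmult_neq_0; [apply Cmult_neq_0; [apply RtoC_neq; lra | exact HX0] |].
    apply RtoC_neq. destruct (sign_cases s Hs); subst; lra. }
  assert (HDm0 : D am <> 0).
  { unfold D. apply Cmult_neq_0; [apply Cmult_neq_0; [apply RtoC_neq; lra | exact HX0] |].
    apply RtoC_neq. destruct (sign_cases s Hs); subst; lra. }
  set (rp := Cconj bp / D ap). set (rm := D am / Cconj bm).
  assert (Rp1 : Cconj bp = rp * D ap) by (unfold rp; field; auto).
  assert (Rm1 : Cconj bm * rm = D am) by (unfold rm; field; auto).
  assert (Rp2 : bp * rp * X = RtoC l * Cconj q * X - (RtoC l * RtoC p - RtoC be * RtoC ap)).
  { apply (Cmult_eq_reg_l (D ap)); auto. rewrite <- HN. unfold rp.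
    rewrite <- Hbpc. field. auto. }
  assert (Rm2 : bm * X = rm * (RtoC l * Cconj q * X - (RtoC l * RtoC p - RtoC be * RtoC am))).
  { apply (Cmult_eq_reg_l (Cconj bm)); auto. 
    transitivity ((bm * Cconj bm) * X); [ring|]. rewrite Hbmc, HN. unfold rm. field. auto. }
  assert (FX := f_equal Cmod HXK). rewrite Cmod_mult, <- RtoC_mulE, <- RtoC_mulE, <- RtoC_subE, !Cmod_mult, !Cmod_R in FX.
  assert (Habs : forall t : R, (Rabs t * Rabs t = t * t)%R).
  { intros t. rewrite <- Rabs_mult. apply Rabs_pos_eq. nra. }
  assert (HCD : forall a : R, Cmod (D a) = (al * Cmod X * Rabs (s - a))%R).
  { intros a. unfold D. rewrite !Cmod_mult, !Cmod_R, (Rabs_pos_eq al) by lra. ring. }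
  set (x := Cmod X) in *.
  assert (Hx : (0 < x)%R) by (apply Cmod_gt_0; auto).
  set (A := (al * al * (l * l) * (1 - p * p))%R).
  set (B := ((al - s * l * p) * (al - s * l * p))%R).
  assert (HAB : (al * al * (x * x) * B = A)%R).
  { assert (E : (x * Rabs (s * al - l * p) * (x * Rabs (s * al - l * p)) = Rabs l * Cmod q * (Rabs l * Cmod q))%R)
      by (rewrite FX; ring).
    replace (x * Rabs (s * al - l * p) * (x * Rabs (s * al - l * p)))%R with
      (x * x * (Rabs (s * al - l * p) * Rabs (s * al - l * p)))%R in E by ring.
    replace (Rabs l * Cmod q * (Rabs l * Cmod q))%R with (Rabs l * Rabs l * (Cmod q * Cmod q))%R in E by ring.
    rewrite !Habs in E. replace (Cmod q * Cmod q)%R with (1 - p * p)%R in E by lra.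
    assert (EB : ((s * al - l * p) * (s * al - l * p) = B)%R).
    { unfold B. transitivity ((al - s * l * p) * (al - s * l * p) + (s * s - 1) * (al * al - l * l * p * p))%R; [ring|].
      rewrite Hs. ring. }
    rewrite EB in E. unfold A. transitivity (al * al * (x * x * B))%R; [ring|]. rewrite E. ring. }
  assert (HB : (0 < B)%R).
  { assert (al - s * l * p <> 0)%R.
    { intro E. apply HK. assert (Es : (s * (al - s * l * p) = s * al - (s * s) * l * p)%R) by ring.
      rewrite Hs, E in Es. lra. }
    unfold B. nra. }
  assert (HA : (0 <= A)%R).
  { unfold A. assert (0 <= 1 - p * p)%R by nra. assert (0 <= al * al * (l * l))%R by nra. nra. }
  assert (Hrp : (Cmod rp < 1)%R).
  { unfold rp. rewrite Cmod_div by auto. rewrite Cmod_conj, HCD. apply div_lt1; [apply Cmod_ge_0|].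
    pose proof (ineq_real1' s ap A B Hs Hap HB HA H1) as I.
    assert (Hb2 : (Cmod bp * Cmod bp = 1 - ap * ap)%R) by lra.
    assert (I2 : (Cmod bp * Cmod bp < (al * x * Rabs (s - ap)) * (al * x * Rabs (s - ap)))%R).
    { rewrite Hb2. replace ((al * x * Rabs (s - ap)) * (al * x * Rabs (s - ap)))%R with
        (al * al * (x * x) * (Rabs (s - ap) * Rabs (s - ap)))%R by ring. rewrite Habs.
      apply (Rmult_lt_reg_r B); auto. rewrite <- HAB in I. nra. }
    pose proof (Cmod_ge_0 bp). assert (0 <= al * x * Rabs (s - ap))%R.
    { pose proof (Rabs_pos (s - ap)). apply Rmult_le_pos; nra. }
    nra. }
  assert (Hrm : (Cmod rm < 1)%R).
  { unfold rm. rewrite Cmod_div by auto. rewrite Cmod_conj, HCD. apply div_lt1.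
    { pose proof (Rabs_pos (s - am)). apply Rmult_le_pos; nra. }
    pose proof (ineq_real2' s am A B Hs Ham HB HA H2) as I.
    assert (Hb2 : (Cmod bm * Cmod bm = 1 - am * am)%R) by lra.
    assert (I2 : ((al * x * Rabs (s - am)) * (al * x * Rabs (s - am)) < Cmod bm * Cmod bm)%R).
    { rewrite Hb2. replace ((al * x * Rabs (s - am)) * (al * x * Rabs (s - am)))%R with
        (al * al * (x * x) * (Rabs (s - am) * Rabs (s - am)))%R by ring. rewrite Habs.
      apply (Rmult_lt_reg_r B); auto. rewrite <- HAB in I. nra. }
    pose proof (Cmod_ge_0 bm). assert (0 <= al * x * Rabs (s - am))%R.
    { pose proof (Rabs_pos (s - am)). apply Rmult_le_pos; nra. }
    nra. }
  set (Psi := fun z : Z => if (0 <=? z)%Z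
                 then (Cpow rp (Z.to_nat z) * (rp * X), Cpow rp (Z.to_nat z) * 1)
                 else (Cpow rm (Z.to_nat (- z - 1)) * X, Cpow rm (Z.to_nat (- z - 1)) * rm)).
  assert (PsiP : forall n, Psi (Z.of_nat n) = (Cpow rp n * (rp * X), Cpow rp n * 1)).
  { intros n. unfold Psi. destruct (Z.leb_spec 0 (Z.of_nat n)); [|lia]. rewrite Nat2Z.id. reflexivity. }
  assert (PsiN : forall n, Psi (- Z.of_nat n - 1)%Z = (Cpow rm n * X, Cpow rm n * rm)).
  { intros n. unfold Psi. destruct (Z.leb_spec 0 (- Z.of_nat n - 1)); [lia|].
    replace (- (- Z.of_nat n - 1) - 1)%Z with (Z.of_nat n) by lia. rewrite Nat2Z.id. reflexivity. }
  assert (Hpow2 : forall (y : R) (n : nat), ((y ^ n) ^ 2 = (y ^ 2) ^ n)%R).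
  { intros y n. rewrite <- !pow_mult. f_equal. lia. }
  exists Psi. split; [split|split].
  - apply (ex_series_ext (fun n => scal (Cmod (rp * X) ^ 2 + 1)%R ((Cmod rp ^ 2) ^ n)%R)).
    + intros n. assert (E : ((Cmod (rp * X) ^ 2 + 1) * (Cmod rp ^ 2) ^ n = sqnorm2 (Psi (Z.of_nat n)))%R).
      { rewrite PsiP. unfold sqnorm2. simpl fst; simpl snd.
        rewrite !Cmod_mult, Cmod_1, !Cmod_pow. rewrite <- Hpow2. ring. }
      exact E.
    + apply (@ex_series_scal_l R_AbsRing R_NormedModule). apply ex_series_geom.
      rewrite Rabs_pos_eq by (apply pow_le; apply Cmod_ge_0).
      pose proof (Cmod_ge_0 rp). nra.
  - apply (ex_series_ext (fun n => scal (Cmod X ^ 2 + Cmod rm ^ 2)%R ((Cmod rm ^ 2) ^ n)%R)).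
    + intros n. assert (E : ((Cmod X ^ 2 + Cmod rm ^ 2) * (Cmod rm ^ 2) ^ n = sqnorm2 (Psi (- Z.of_nat n - 1)%Z))%R).
      { rewrite PsiN. unfold sqnorm2. simpl fst; simpl snd.
        rewrite !Cmod_mult, !Cmod_pow. rewrite <- Hpow2. ring. }
      exact E.
    + apply (@ex_series_scal_l R_AbsRing R_NormedModule). apply ex_series_geom.
      rewrite Rabs_pos_eq by (apply pow_le; apply Cmod_ge_0).
      pose proof (Cmod_ge_0 rm). nra.
  - exists 0%Z. intro E. apply (f_equal snd) in E.
    change 0%Z with (Z.of_nat 0) in E. rewrite PsiP in E. simpl in E.
    injection E. intros. lra.
  - unfold U_op. apply (eig_of_ce gamma p q (two_phase ap am) (two_phase bp bm) Hpq).
    intros z. unfold CE1, CE2. fold al be.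
    destruct (Z_le_gt_dec 0 z) as [Hz|Hz].
    + replace z with (Z.of_nat (Z.to_nat z)) by lia. generalize (Z.to_nat z). intros n. clear Hz.
      rewrite (tp_pos ap am), (tp_pos bp bm) by lia. rewrite RtoC_mulE, RtoC_mulE.
      split.
      * replace (Z.of_nat n + 1)%Z with (Z.of_nat (S n)) by lia. rewrite !PsiP. simpl fst; simpl snd.
        rewrite ?Cpow_S'. specialize (HD ap).
        clear - Rp1 HD. nsatz.
      * destruct n as [|m].
        -- change (Z.of_nat 0 - 1)%Z with (- Z.of_nat 0 - 1)%Z. rewrite PsiP, PsiN. simpl fst; simpl snd.
           change (Cpow rp 0) with 1. change (Cpow rm 0) with 1.
           clear - Rp2. nsatz.
        -- replace (Z.of_nat (S m) - 1)%Z with (Z.of_nat m) by lia. rewrite !PsiP. simpl fst; simpl snd.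
           rewrite ?Cpow_S'. clear - Rp2. nsatz.
    + replace z with (- Z.of_nat (Z.to_nat (- z - 1)) - 1)%Z by lia. generalize (Z.to_nat (- z - 1)). intros n. clear Hz.
      rewrite (tp_neg ap am), (tp_neg bp bm) by lia. rewrite RtoC_mulE, RtoC_mulE.
      split.
      * destruct n as [|m].
        -- change (- Z.of_nat 0 - 1 + 1)%Z with (Z.of_nat 0). rewrite PsiP, PsiN. simpl fst; simpl snd.
           change (Cpow rp 0) with 1. change (Cpow rm 0) with 1.
           specialize (HD am). clear - Rm1 HD. nsatz.
        -- replace (- Z.of_nat (S m) - 1 + 1)%Z with (- Z.of_nat m - 1)%Z by lia. rewrite !PsiN. simpl fst; simpl snd.
           rewrite ?Cpow_S'. specialize (HD am). clear - Rm1 HD. nsatz.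
      * replace (- Z.of_nat n - 1 - 1)%Z with (- Z.of_nat (S n) - 1)%Z by lia. rewrite !PsiN. simpl fst; simpl snd.
        rewrite ?Cpow_S'. clear - Rm2. nsatz.
Qed.

Open Scope R_scope.

Theorem theorem3p3 (gamma p : R) (q : C) (ap am : R) (bp bm : C) :
  -1 < p < 1 -> p ^ 2 + (Cmod q) ^ 2 = 1 ->
  -1 < ap < 1 -> -1 < am < 1 ->
  ap ^ 2 + (Cmod bp) ^ 2 = 1 -> am ^ 2 + (Cmod bm) ^ 2 = 1 ->
  forall lam : C,
    in_point_spectrum gamma p q ap am bp bm lam <->
    (in_sigma_minus gamma p q ap am lam \/ in_sigma_plus gamma p q ap am lam).
Proof.
  intros Hp Hpq Hap Ham Hbp Hbm lam. split.
  - intros H. destruct (fwd gamma p q ap am bp bm Hp Hpq Hap Ham Hbp Hbm lam H) as [s [l [Hs [Hl [Hq [H1 H2]]]]]].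
    eapply conv_fwd; eauto.
  - intros H. destruct (conv_bwd gamma p q Hp Hpq ap am lam H) as [s [l [Hs [Hl [Hq [H1 H2]]]]]].
    subst lam. eapply bwd; eauto.
Qed.
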